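(* Let $H$ and $K$ be subgroups of a finite group $G$ such that $HK$ is a subgroup. If $H\cap K$ is a perfect code of $K$, then $H$ is a perfect code of $HK$.
   Context: For a group $G$ with identity $e$ and an inverse-closed subset $S\subseteq G\setminus\{e\}$, the Cayley graph $\mathrm{Cay}(G,S)$ has vertex set $G$ and edges $\{g,sg\}$ for $s\in S$, $g\in G$. A perfect code in a graph is an independent set $C$ of vertices such that every vertex outside $C$ is adjacent to exactly one vertex of $C$. A subgroup $H$ of $G$ is a perfect code of $G$ if some Cayley graph of $G$ admits $H$ as a perfect code. *)

(* Defs.v *)
From mathcomp Require Import all_boot all_fingroup.
Set Implicit Arguments. Unset Strict Implicit. Unset Printing Implicit Defensive.
Local Open Scope group_scope.

(* Cayley graph Cay(G,S): vertex set G, edges {g, s g} for s in S. *)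
Definition cay_adj (gT : finGroupType) (S : {set gT}) (g h : gT) : bool :=
  h * g^-1 \in S.

Definition connection_set (gT : finGroupType) (G S : {set gT}) : Prop :=
  [/\ S \subset G, 1 \notin S & forall s, s \in S -> s^-1 \in S].

Definition perfect_code_cay (gT : finGroupType) (G S C : {set gT}) : Prop :=
  [/\ C \subset G,
      (forall c1 c2, c1 \in C -> c2 \in C -> ~~ cay_adj S c1 c2) &
      (forall g, g \in G -> g \notin C ->
         #|[set c in C | cay_adj S g c]| = 1%N)].

Definition subgroup_perfect_code (gT : finGroupType) (G H : {set gT}) : Prop :=
  H \subset G /\ exists S : {set gT}, connection_set G S /\ perfect_code_cay G S H.

(* Main.v *)
Require Import Defs.
From mathcomp Require Import all_boot all_fingroup.
Local Open Scope group_scope.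

Theorem lemma4p1 (gT : finGroupType) (G H K : {group gT}) :
  H \subset G -> K \subset G -> group_set (H * K) ->
  subgroup_perfect_code K (H :&: K) ->
  subgroup_perfect_code (H * K) H.
Proof.
move=> _ _ gHK [_ [S [[sSK S1 Sinv] [_ indep uniq]]]].
have comm : H * K = K * H by apply/comm_group_setP.
have sSHK : S \subset H * K.
  apply: subset_trans sSK _; exact: mulG_subr.
split; first exact: mulG_subl.
exists S; split; first by split.
split; first exact: mulG_subl.
- move=> c1 c2 c1H c2H; apply/negP => adj.
  have xK : c2 * c1^-1 \in K by apply: (subsetP sSK).
  have xL : c2 * c1^-1 \in H :&: K by rewrite inE xK groupM ?groupV.
  have := indep 1 (c2 * c1^-1) (group1 _) xL.
  by rewrite /cay_adj invg1 mulg1 -/(cay_adj S c1 c2) adj.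
- move=> g; rewrite comm => /mulsgP [k h kK hH ->] gnH.
  have knH : k \notin H :&: K.
    by apply: contra gnH; rewrite inE => /andP [kH _]; rewrite groupM.
  rewrite -(uniq k kK knH).
  rewrite -(card_rcoset [set c in H :&: K | cay_adj S k c] h).
  congr (#|pred_of_set _|); apply/setP => c.
  rewrite mem_rcoset !inE /cay_adj invMg.
  rewrite (groupMr _ (groupVr hH)).
  case cH: (c \in H) => //=.
  rewrite mulgA; case e: (c * h^-1 * k^-1 \in S); rewrite ?andbF ?andbT //.
  have := subsetP sSK _ e; rewrite (groupMr _ (groupVr kK)) => ->.
  done.
Qed.
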